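(* Let $\langle\cdot,\cdot\rangle$ be an invariant symmetric bilinear form on $\mathfrak g$, extended pointwise to $\mathfrak g$-valued functions and 1-forms on $\Sigma$. Let $\omega$ be a meromorphic $\mathfrak g$-valued 1-form on $\Sigma$, holomorphic outside $\Pi\cup\Gamma$, which at every $\gamma\in\Gamma$ has, in a local coordinate $z$ centered at $\gamma$, the expansion $\omega=\left(\frac{h_\gamma}{z}+\omega_0+\omega_1z+\dots\right)dz$ with all $\omega_l\in\mathfrak g_0$ (the degree $0$ subspace of the grading given by $h_\gamma$). Then for all $L,L'\in\mathcal L$ the meromorphic 1-form $\langle L,(d-\mathrm{ad}\,\omega)L'\rangle$ is holomorphic at every point of $\Gamma$ (hence holomorphic outside $\{P_1,\dots,P_N\}\cup\{Q_1,\dots,Q_M\}$).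
   Context: Let $\mathfrak g$ be a complex semisimple Lie algebra with Cartan subalgebra $\mathfrak h$. An element $h\in\mathfrak h$ with $\alpha_i(h)\in\mathbb Z_{\ge0}$ for all simple roots $\alpha_i$ defines a $\mathbb Z$-grading $\mathfrak g=\bigoplus_{p=-k}^k\mathfrak g_p$, $\mathfrak g_p=\{X\in\mathfrak g:(\mathrm{ad}\,h)X=pX\}$, $k=\max\{p:\mathfrak g_p\neq0\}$, and a filtration $\tilde{\mathfrak g}_p=\bigoplus_{q=-k}^{p}\mathfrak g_q$. Let $\Sigma$ be a compact Riemann surface of genus $g$ with disjoint finite sets $\Pi=\{P_1,\dots,P_N\}\cup\{Q_1,\dots,Q_M\}$ and $\Gamma$. For each $\gamma\in\Gamma$ fix such a grading element $h_\gamma$ (all of depth $k$). $\mathcal L$ is the space of meromorphic maps $L:\Sigma\to\mathfrak g$, holomorphic outside $\Pi\cup\Gamma$, such that at each $\gamma\in\Gamma$, in a local coordinate $z$ centered at $\gamma$, $L(z)=\sum_{p\ge -k}L_pz^p$ with $L_p\in\tilde{\mathfrak g}_p$ (for the grading given by $h_\gamma$). Here $(\mathrm{ad}\,\omega)L'$ denotes the 1-form $[\omega,L']$. *)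

(* Defs.v *)
From HB Require Import structures.
From mathcomp Require Import all_boot all_order all_algebra.
Set Implicit Arguments. Unset Strict Implicit. Unset Printing Implicit Defensive.
Import Order.TTheory GRing.Theory Num.Theory.
Local Open Scope ring_scope.

Section Lie.
Variables (F : fieldType) (d : nat).
Local Notation V := 'rV[F]_d.
Variable br : V -> V -> V.

Definition is_lie_bracket : Prop :=
  [/\ (forall a x y z, br (a *: x + y) z = a *: br x z + br y z),
      (forall a x y z, br z (a *: x + y) = a *: br z x + br z y),
      (forall x, br x x = 0) &
      (forall x y z, br x (br y z) + br y (br z x) + br z (br x y) = 0)].

(* subspaces of g are represented by (square) matrices, via their row space *)
Definition lie_ideal (I : 'M[F]_d) : Prop :=
  forall x y : V, (x <= I)%MS -> (br x y <= I)%MS.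

Definition derived (I : 'M[F]_d) : 'M[F]_d :=
  (\sum_(i < d) \sum_(j < d) <<br (row i I) (row j I)>>)%MS.

Definition solvable_sub (I : 'M[F]_d) : Prop :=
  exists m, iter m derived I = 0.

Definition semisimple_lie : Prop :=
  forall I : 'M[F]_d, lie_ideal I -> solvable_sub I -> I = 0.

Definition ad (x : V) : 'M[F]_d := lin1_mx (br x).

Definition lie_subalg (H : 'M[F]_d) : Prop :=
  forall x y : V, (x <= H)%MS -> (y <= H)%MS -> (br x y <= H)%MS.

Definition toral (H : 'M[F]_d) : Prop :=
  [/\ lie_subalg H,
      (forall x y : V, (x <= H)%MS -> (y <= H)%MS -> br x y = 0) &
      (forall x : V, (x <= H)%MS -> diagonalizable (ad x))].

Definition cartan_subalg (H : 'M[F]_d) : Prop :=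
  toral H /\ (forall H' : 'M[F]_d, toral H' -> (H <= H')%MS -> (H' <= H)%MS).

(* roots of (g, H): nonzero functionals on H having a nonzero root vector.
   A functional on H is represented by a function V -> F (values outside H
   are irrelevant). *)
Definition is_root (H : 'M[F]_d) (al : V -> F) : Prop :=
  (exists2 t : V, (t <= H)%MS & al t != 0) /\
  (exists2 x : V, x != 0 & forall t : V, (t <= H)%MS -> br t x = al t *: x).

Definition nthf (s : seq (V -> F)) (i : nat) : V -> F := nth (fun _ => 0) s i.

Definition is_base (H : 'M[F]_d) (D : seq (V -> F)) : Prop :=
  [/\ (forall i, (i < size D)%N -> is_root H (nthf D i)),
      (forall c : 'I_(size D) -> F,
          (forall t : V, (t <= H)%MS -> \sum_(i < size D) c i * nthf D i t = 0) ->
          forall i, c i = 0) &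
      (forall be : V -> F, is_root H be ->
         exists m : 'I_(size D) -> nat,
           (forall t : V, (t <= H)%MS -> be t = \sum_(i < size D) (m i)%:R * nthf D i t) \/
           (forall t : V, (t <= H)%MS -> be t = - \sum_(i < size D) (m i)%:R * nthf D i t))].

Definition grading_element (h : V) : Prop :=
  exists H : 'M[F]_d, [/\ cartan_subalg H, (h <= H)%MS &
    exists D : seq (V -> F), is_base H D /\
      forall i, (i < size D)%N -> exists m : nat, nthf D i h = m%:R].

Definition in_grade (h : V) (p : int) (x : V) : Prop := br h x = p%:~R *: x.

Definition is_depth (h : V) (k : nat) : Prop :=
  (exists2 x : V, x != 0 & in_grade h k%:Z x) /\
  (forall (p : int) (x : V), (k%:Z < p)%R -> in_grade h p x -> x = 0).

Definition in_filt (h : V) (p : int) (x : V) : Prop :=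
  exists (s : seq int) (f : int -> V),
    [/\ all (fun q => (q <= p)%R) s, (forall q, in_grade h q (f q)) &
        x = \sum_(q <- s) f q].

Definition inv_sym_bilinear (B : V -> V -> F) : Prop :=
  [/\ (forall a x y z, B (a *: x + y) z = a * B x z + B y z),
      (forall x y, B x y = B y x) &
      (forall x y z, B (br x y) z = B x (br y z))].

End Lie.

(* Cauchy product coefficient of two Laurent series (in a local coordinate z)
   whose coefficients vanish below lo1 and lo2 respectively:
   cprod lo1 lo2 f n = sum_{p + q = n} f p q. *)
Definition cprod (R : nmodType) (lo1 lo2 : int) (f : int -> int -> R) (n : int) : R :=
  if (lo1 + lo2 <= n)%R then
    \sum_(i < (absz (n - lo1 - lo2)%R).+1) f (lo1 + i%:Z)%R (n - lo1 - i%:Z)%R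
  else 0.

(* Coefficient of z^n dz in the 1-form <L, (d - ad w) L'>, where
   L = sum_{p >= -k} L p z^p, L' = sum_{q >= -k} L' q z^q and
   w = (sum_{s >= -1} w s z^s) dz. *)
Definition form_coef (F : fieldType) (d : nat) (br : 'rV[F]_d -> 'rV[F]_d -> 'rV[F]_d)
  (B : 'rV[F]_d -> 'rV[F]_d -> F) (k : nat) (L L' w : int -> 'rV[F]_d) (n : int) : F :=
  let kk := k%:Z in
  (* d L' = sum_m (m+1) L'_{m+1} z^m dz, vanishing for m < -k-1 *)
  let dL' := fun m : int => (m + 1)%:~R *: L' (m + 1)%R in
  (* [w, L'] = sum_m (sum_{s+q=m} [w_s, L'_q]) z^m dz *)
  let wL' := cprod (-1) (- kk) (fun s q => br (w s) (L' q)) in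
  cprod (- kk) (- kk - 1) (fun p m => B (L p) (dL' m)) n
  - cprod (- kk) (- kk - 1) (fun p m => B (L p) (wL' m)) n.

(* Main.v *)
Require Import Defs.
From HB Require Import structures.
From mathcomp Require Import all_boot all_order all_algebra.
From mathcomp Require Import zify.
Import Order.TTheory GRing.Theory Num.Theory.
Set Implicit Arguments. Unset Strict Implicit. Unset Printing Implicit Defensive.
Local Open Scope ring_scope.

Lemma br0l (F : fieldType) d (br : 'rV[F]_d -> 'rV[F]_d -> 'rV[F]_d)
  (H : is_lie_bracket br) z : br 0 z = 0.
Proof.
case: H => H1 _ _ _; have := H1 (-1) z z z.
by rewrite !scaleN1r !addNr.
Qed.

Lemma br0r (F : fieldType) d (br : 'rV[F]_d -> 'rV[F]_d -> 'rV[F]_d)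
  (H : is_lie_bracket br) z : br z 0 = 0.
Proof.
case: H => _ H1 _ _; have := H1 (-1) z z z.
by rewrite !scaleN1r !addNr.
Qed.

Lemma brDl (F : fieldType) d (br : 'rV[F]_d -> 'rV[F]_d -> 'rV[F]_d)
  (H : is_lie_bracket br) x y z : br (x + y) z = br x z + br y z.
Proof. case: H => H1 _ _ _; by have := H1 1 x y z; rewrite !scale1r. Qed.

Lemma brDr (F : fieldType) d (br : 'rV[F]_d -> 'rV[F]_d -> 'rV[F]_d)
  (H : is_lie_bracket br) x y z : br z (x + y) = br z x + br z y.
Proof. case: H => _ H1 _ _; by have := H1 1 x y z; rewrite !scale1r. Qed.

Lemma brZr (F : fieldType) d (br : 'rV[F]_d -> 'rV[F]_d -> 'rV[F]_d)
  (H : is_lie_bracket br) a x z : br z (a *: x) = a *: br z x.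
Proof.
have := br0r H z; case: H => _ H1 _ _ e.
by have := H1 a x 0 z; rewrite !addr0 e addr0.
Qed.

Lemma brNr (F : fieldType) d (br : 'rV[F]_d -> 'rV[F]_d -> 'rV[F]_d)
  (H : is_lie_bracket br) x z : br z (- x) = - br z x.
Proof. by rewrite -scaleN1r (brZr H) scaleN1r. Qed.

Lemma br_anti (F : fieldType) d (br : 'rV[F]_d -> 'rV[F]_d -> 'rV[F]_d)
  (H : is_lie_bracket br) x y : br y x = - br x y.
Proof.
have := H; case=> _ _ H3 _.
have := H3 (x + y); rewrite (brDl H) !(brDr H) !H3 add0r addr0 => /eqP.
by rewrite addr_eq0 => /eqP ->; rewrite opprK.
Qed.

Lemma br_sumr (F : fieldType) d (br : 'rV[F]_d -> 'rV[F]_d -> 'rV[F]_d)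
  (H : is_lie_bracket br) (I : Type) (s : seq I) (f : I -> 'rV[F]_d) x :
  br x (\sum_(i <- s) f i) = \sum_(i <- s) br x (f i).
Proof.
elim: s => [|a s IH]; first by rewrite !big_nil br0r.
by rewrite !big_cons (brDr H) IH.
Qed.

Lemma B0l (F : fieldType) d (br : 'rV[F]_d -> 'rV[F]_d -> 'rV[F]_d) B
  (HB : inv_sym_bilinear br B) z : B 0 z = 0.
Proof.
case: HB => H1 _ _; have := H1 (-1) z z z.
by rewrite scaleN1r addNr mulN1r addNr.
Qed.

Lemma B0r (F : fieldType) d (br : 'rV[F]_d -> 'rV[F]_d -> 'rV[F]_d) B
  (HB : inv_sym_bilinear br B) z : B z 0 = 0.
Proof. have := B0l HB z; case: HB => _ H2 _; by rewrite H2. Qed.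

Lemma BDl (F : fieldType) d (br : 'rV[F]_d -> 'rV[F]_d -> 'rV[F]_d) B
  (HB : inv_sym_bilinear br B) x y z : B (x + y) z = B x z + B y z.
Proof. case: HB => H1 _ _; by have := H1 1 x y z; rewrite scale1r mul1r. Qed.

Lemma BZl (F : fieldType) d (br : 'rV[F]_d -> 'rV[F]_d -> 'rV[F]_d) B
  (HB : inv_sym_bilinear br B) a x z : B (a *: x) z = a * B x z.
Proof.
have := B0l HB z; case: HB => H1 _ _ e.
by have := H1 a x 0 z; rewrite addr0 e addr0.
Qed.

Lemma BDr (F : fieldType) d (br : 'rV[F]_d -> 'rV[F]_d -> 'rV[F]_d) B
  (HB : inv_sym_bilinear br B) x y z : B z (x + y) = B z x + B z y.
Proof. have := BDl HB x y z; case: HB => _ H2 _; by rewrite !(H2 z) . Qed.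

Lemma BZr (F : fieldType) d (br : 'rV[F]_d -> 'rV[F]_d -> 'rV[F]_d) B
  (HB : inv_sym_bilinear br B) a x z : B z (a *: x) = a * B z x.
Proof. have := BZl HB a x z; case: HB => _ H2 _; by rewrite !(H2 z). Qed.

Lemma BNr (F : fieldType) d (br : 'rV[F]_d -> 'rV[F]_d -> 'rV[F]_d) B
  (HB : inv_sym_bilinear br B) x z : B z (- x) = - B z x.
Proof. by rewrite -scaleN1r (BZr HB) mulN1r. Qed.

Lemma B_sumr (F : fieldType) d (br : 'rV[F]_d -> 'rV[F]_d -> 'rV[F]_d) B
  (HB : inv_sym_bilinear br B) (I : Type) (s : seq I) (f : I -> 'rV[F]_d) x :
  B x (\sum_(i <- s) f i) = \sum_(i <- s) B x (f i).
Proof.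
elim: s => [|a s IH]; first by rewrite !big_nil (B0r HB).
by rewrite !big_cons (BDr HB) IH.
Qed.

Lemma B_suml (F : fieldType) d (br : 'rV[F]_d -> 'rV[F]_d -> 'rV[F]_d) B
  (HB : inv_sym_bilinear br B) (I : Type) (s : seq I) (f : I -> 'rV[F]_d) x :
  B (\sum_(i <- s) f i) x = \sum_(i <- s) B (f i) x.
Proof.
elim: s => [|a s IH]; first by rewrite !big_nil (B0l HB).
by rewrite !big_cons (BDl HB) IH.
Qed.

Lemma orth (F : numFieldType) d (br : 'rV[F]_d -> 'rV[F]_d -> 'rV[F]_d) B
  (Hlie : is_lie_bracket br) (HB : inv_sym_bilinear br B) h (a b : int) x y :
  in_grade br h a x -> in_grade br h b y -> a + b != 0 -> B x y = 0.
Proof.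
rewrite /in_grade => Hx Hy nab.
have e1 : a%:~R * B x y = B h (br x y).
  by rewrite -(BZl HB) -Hx; case: HB => _ _ ->.
have e2 : b%:~R * B x y = - B h (br x y).
  case: (HB) => _ H2 H3.
  by rewrite H2 -(BZl HB) -Hy H3 (br_anti Hlie x y) (BNr HB).
have : (a + b)%:~R * B x y = 0 by rewrite intrD mulrDl e1 e2 addrN.
by move/eqP; rewrite mulf_eq0 intr_eq0 (negbTE nab) /= => /eqP.
Qed.

Lemma grade_br (F : numFieldType) d (br : 'rV[F]_d -> 'rV[F]_d -> 'rV[F]_d)
  (Hlie : is_lie_bracket br) h (b : int) u y :
  in_grade br h 0 u -> in_grade br h b y -> in_grade br h b (br u y).
Proof.
rewrite /in_grade => Hu Hy.
have := Hlie; case=> _ _ _ H4.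
have := H4 h u y; rewrite Hu scale0r (br0r Hlie) addr0 (br_anti Hlie h y) Hy.
rewrite (brNr Hlie) (brZr Hlie) => /eqP; rewrite subr_eq0 => /eqP.
done.
Qed.

Lemma filt_orth_w (F : numFieldType) d (br : 'rV[F]_d -> 'rV[F]_d -> 'rV[F]_d) B
  (Hlie : is_lie_bracket br) (HB : inv_sym_bilinear br B) h (p q : int) x y u :
  in_filt br h p x -> in_filt br h q y -> in_grade br h 0 u -> p + q < 0 ->
  B x (br u y) = 0.
Proof.
move=> [s1 [f1 [Hs1 Hf1 ->]]] [s2 [f2 [Hs2 Hf2 ->]]] Hu Hpq.
rewrite (B_suml HB); apply: big1_seq => a /andP[_ ain].
rewrite (br_sumr Hlie) (B_sumr HB); apply: big1_seq => b /andP[_ bin].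
apply: (orth Hlie HB (Hf1 a) (grade_br Hlie Hu (Hf2 b))).
have := allP Hs1 a ain; have := allP Hs2 b bin => /= hb ha.
lia.
Qed.

Lemma filt_h (F : numFieldType) d (br : 'rV[F]_d -> 'rV[F]_d -> 'rV[F]_d) B
  (Hlie : is_lie_bracket br) (HB : inv_sym_bilinear br B) h (p q : int) x y :
  in_filt br h p x -> in_filt br h q y -> p + q <= 0 ->
  B x (q%:~R *: y) = B x (br h y).
Proof.
move=> [s1 [f1 [Hs1 Hf1 ->]]] [s2 [f2 [Hs2 Hf2 ->]]] Hpq.
rewrite scaler_sumr (br_sumr Hlie) !(B_suml HB); apply: eq_big_seq => a ain.
rewrite !(B_sumr HB); apply: eq_big_seq => b bin.
rewrite (Hf2 b) !(BZr HB).
case: (eqVneq b q) => [->//|nbq].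
rewrite (orth Hlie HB (Hf1 a) (Hf2 b)) ?mulr0 //.
have := allP Hs1 a ain; have := allP Hs2 b bin => /= hb ha.
lia.
Qed.

Theorem theorem2p2 (F : numClosedFieldType) (d : nat)
  (br : 'rV[F]_d -> 'rV[F]_d -> 'rV[F]_d)
  (Hlie : is_lie_bracket br) (Hss : semisimple_lie br)
  (h : 'rV[F]_d) (Hh : grading_element br h)
  (k : nat) (Hk : is_depth br h k)
  (B : 'rV[F]_d -> 'rV[F]_d -> F) (HB : inv_sym_bilinear br B)
  (w : int -> 'rV[F]_d)
  (Hw_low : forall s : int, s < -1 -> w s = 0)
  (Hw_res : w (-1) = h)
  (Hw_0 : forall s : int, 0 <= s -> in_grade br h 0 (w s))
  (L L' : int -> 'rV[F]_d)
  (HL_low : forall p : int, p < - k%:Z -> L p = 0)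
  (HL_filt : forall p : int, in_filt br h p (L p))
  (HL'_low : forall p : int, p < - k%:Z -> L' p = 0)
  (HL'_filt : forall p : int, in_filt br h p (L' p)) :
  forall n : int, n < 0 -> form_coef br B k L L' w n = 0.
Proof.
move=> n hn.
have key : forall p m : int, p + m = n ->
  B (L p) ((m + 1)%:~R *: L' (m + 1)) =
  B (L p) (cprod (-1) (- k%:Z) (fun s q => br (w s) (L' q)) m).
  move=> p m hpm; rewrite /cprod.
  case: ifP => hm; last first.
    rewrite HL'_low ?scaler0 //; move/negbT: hm; lia.
  rewrite big_ord_recl (BDr HB) (B_sumr HB) big1 ?addr0; last first.
    move=> i _; apply: (filt_orth_w Hlie HB (HL_filt p) (HL'_filt _)).
      by apply: Hw_0; rewrite lift0; lia.
    rewrite lift0; lia.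
  have -> : m - -1 = m + 1 by lia.
  rewrite Hw_res (filt_h Hlie HB (HL_filt p) (HL'_filt (m+1))) //; lia.
rewrite /form_coef /=.
apply/eqP; rewrite subr_eq0; apply/eqP.
rewrite /cprod; case: ifP => // _; apply: eq_bigr => i _.
apply: key; lia.
Qed.
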